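(* Let $(k,R,t)\in\mathbb{R}^3$ with $R>0$, $t\neq 0$, $k\neq 0,1$. For a parameter $t$ let $c(t)=\frac{1-t^2}{1+t^2}$, $s(t)=\frac{2t}{1+t^2}$ and let $T_{k,R,t}=\{(x,y,z)\in\mathbb{R}^3: F_1=F_2=0\}$ with $$F_1=y^2-(xs(t)-yc(t))^2+2z-1,\qquad F_2=\bigl(x^2-2kz+R^2+k^2\bigr)^2-4R^2(x^2+y^2).$$ Then the trisectors $T_{k,R,t}$ and $T_{k,R,-t}$ are projectively equivalent (their projective closures in $\mathbb{P}^3$ are related by a projective linear transformation). In particular, the sign of $t$ does not affect the real projective topology of the trisector.
   Context: $T_{k,R,t}$ is the trisector of the $x$-axis $L_1$, the line $L_2$ through $(0,0,1)$ with direction $(c,s,0)$, and the circle of radius $R$ centered at $(0,0,k)$ in the plane $z=k$, defined as the common zero set of the two bisector polynomials above; its projective closure is obtained by homogenizing with $x=X/W$, $y=Y/W$, $z=Z/W$ and saturating with respect to $W$. *)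

(* Defs.v *)
From HB Require Import structures.
From mathcomp Require Import all_boot all_order all_algebra.
From mathcomp Require Import mpoly.
Set Implicit Arguments. Unset Strict Implicit. Unset Printing Implicit Defensive.
Import Order.TTheory GRing.Theory Num.Theory.
Local Open Scope ring_scope.

Section Trisector.
Variable R : realFieldType.

Definition cpar (t : R) : R := (1 - t ^+ 2) / (1 + t ^+ 2).
Definition spar (t : R) : R := (2 * t) / (1 + t ^+ 2).

Definition ax : {mpoly R[3]} := 'X_(inord 0).
Definition ay : {mpoly R[3]} := 'X_(inord 1).
Definition az : {mpoly R[3]} := 'X_(inord 2).

Definition F1 (t : R) : {mpoly R[3]} :=
  ay ^+ 2 - (ax * (spar t)%:MP - ay * (cpar t)%:MP) ^+ 2 + 2%:MP * az - 1.

Definition F2 (k Rr : R) : {mpoly R[3]} :=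
  (ax ^+ 2 - (2 * k)%:MP * az + (Rr ^+ 2 + k ^+ 2)%:MP) ^+ 2
  - (4 * Rr ^+ 2)%:MP * (ax ^+ 2 + ay ^+ 2).

(* Homogenization with x = X/W, y = Y/W, z = Z/W: projective coordinates
   X = 'X_0, Y = 'X_1, Z = 'X_2, W = 'X_3 of {mpoly R[4]}.
   p^h = sum_m p_m X^m0 Y^m1 Z^m2 W^(deg p - |m|), where deg p = (msize p).-1. *)
Definition homogenize (p : {mpoly R[3]}) : {mpoly R[4]} :=
  \sum_(m <- msupp p)
     (p@_m *: (\prod_(i < 3) 'X_(inord i) ^+ (m i))
       * 'X_(inord 3) ^+ ((msize p).-1 - mdeg m)%N).

(* The homogeneous ideal of the projective closure of T_{k,R,t}:
   the saturation (F1^h, F2^h) : W^oo. *)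
Definition closure_ideal (k Rr t : R) (G : {mpoly R[4]}) : Prop :=
  exists (n : nat) (a b : {mpoly R[4]}),
    'X_(inord 3) ^+ n * G = a * homogenize (F1 t) + b * homogenize (F2 k Rr).

(* Real points of the projective closure (as nonzero homogeneous coordinate
   vectors in R^4; the set is invariant under nonzero scaling). *)
Definition closure_points (k Rr t : R) (v : 'cV[R]_4) : Prop :=
  v != 0 /\ forall G, closure_ideal k Rr t G -> G.@[fun i => v i 0] = 0.

Definition lin_subst (A : 'M[R]_4) (G : {mpoly R[4]}) : {mpoly R[4]} :=
  G \mPo [tuple \sum_(j < 4) A i j *: 'X_j | i < 4].

End Trisector.

(* Main.v *)
Require Import Defs.
From HB Require Import structures.
From mathcomp Require Import all_boot all_order all_algebra.
From mathcomp Require Import mpoly.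
From mathcomp Require Import ring.
Import Order.TTheory GRing.Theory Num.Theory.
Set Implicit Arguments. Unset Strict Implicit.
Local Open Scope ring_scope.

Section Flip.
Variable R : realFieldType.

Definition sg (n : nat) (i : 'I_n) : R := if val i == 0%N then -1 else 1.
Definition fl (n : nat) : n.-tuple {mpoly R[n]} := [tuple sg i *: 'X_i | i < n].
Definition cm (n : nat) (m : 'X_{1..n}) : R := \prod_(i < n) sg i ^+ m i.

Lemma sg2 n (i : 'I_n) : sg i * sg i = 1.
Proof. by rewrite /sg; case: ifP => _; rewrite ?mulrNN mulr1. Qed.

Lemma cm2 n (m : 'X_{1..n}) : cm m * cm m = 1.
Proof.
rewrite /cm -big_split /= big1 // => i _.
by rewrite -exprMn sg2 expr1n.
Qed.

Lemma cm_neq0 n (m : 'X_{1..n}) : cm m != 0.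
Proof. apply/eqP => h; have := cm2 m; rewrite h mul0r => /eqP; by rewrite eq_sym oner_eq0. Qed.

Lemma flX n (m : 'X_{1..n}) : 'X_[m] \mPo fl n = cm m *: 'X_[m].
Proof.
rewrite comp_mpolyX mpolyXE_id /cm -scaler_prod.
by apply: eq_bigr => i _; rewrite tnth_mktuple exprZn.
Qed.

Lemma flE n (p : {mpoly R[n]}) :
  p \mPo fl n = \sum_(m <- msupp p) (p@_m * cm m) *: 'X_[m].
Proof.
rewrite comp_mpolyEX; apply: eq_bigr => m _; by rewrite flX scalerA.
Qed.

Lemma fl_coef n (p : {mpoly R[n]}) m0 : (p \mPo fl n)@_m0 = p@_m0 * cm m0.
Proof.
rewrite flE.
have -> : p@_m0 = (\sum_(m <- msupp p) (p@_m *: 'X_[m]))@_m0 by rewrite -mpolyE.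
rewrite !raddf_sum /= mulr_suml; apply: eq_bigr => m _.
rewrite !mcoeffZ !mcoeffX; case: eqVneq => [->|_]; by rewrite ?mulr0 ?mul0r ?mulr1 ?mul1r.
Qed.

Lemma fl_supp n (p : {mpoly R[n]}) : perm_eq (msupp (p \mPo fl n)) (msupp p).
Proof.
apply: uniq_perm => // m.
by rewrite !mcoeff_msupp fl_coef mulf_eq0 negb_or cm_neq0 andbT.
Qed.

Lemma fl_size n (p : {mpoly R[n]}) : msize (p \mPo fl n) = msize p.
Proof. by rewrite !msizeE (perm_big _ (fl_supp p)). Qed.

Lemma flfl n (p : {mpoly R[n]}) : (p \mPo fl n) \mPo fl n = p.
Proof.
rewrite (flE p) raddf_sum {3}[p]mpolyE; apply: eq_bigr => m _.
by rewrite /= comp_mpolyZ flX scalerA -mulrA cm2 mulr1.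
Qed.

Lemma homog_fl (p : {mpoly R[3]}) :
  homogenize (p \mPo fl 3) = homogenize p \mPo fl 4.
Proof.
rewrite /homogenize fl_size (perm_big _ (fl_supp p)) /= raddf_sum.
apply: eq_bigr => m _ /=.
rewrite rmorphM /= comp_mpolyZ rmorphXn /= comp_mpolyXU -tnth_nth tnth_mktuple.
have h3 : sg (inord 3 : 'I_4) = 1 by rewrite /sg /= inordK.
rewrite h3 scale1r fl_coef -scalerA; congr (_ *: _ * _).
rewrite rmorph_prod /= /cm -scaler_prod; apply: eq_bigr => i _.
rewrite rmorphXn /= comp_mpolyXU -tnth_nth tnth_mktuple exprZn /sg /= inordK //; last by case: i => /= i /ltn_trans; apply.
Qed.

Lemma F1_fl (t : R) : F1 t \mPo fl 3 = F1 (- t).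
Proof.
have hX : forall i : 'I_3, 'X_i \mPo fl 3 = sg i *: 'X_i.
  by move=> i; rewrite comp_mpolyXU -tnth_nth tnth_mktuple.
have hs : spar (- t) = - spar t by rewrite /spar sqrrN mulrN mulNr.
have hc : cpar (- t) = cpar t by rewrite /cpar sqrrN.
rewrite /F1 hs hc /ax /ay /az; move: (spar t) (cpar t) => s c.
rewrite !(rmorphB, rmorphD, rmorphM, rmorphXn, rmorph1) /=.
rewrite !comp_mpolyC !hX /sg /= !inordK //= !scale1r mpolyCN !scaleN1r.
ring.
Qed.

Lemma F2_fl (k Rr : R) : F2 k Rr \mPo fl 3 = F2 k Rr.
Proof.
have hX : forall i : 'I_3, 'X_i \mPo fl 3 = sg i *: 'X_i.
  by move=> i; rewrite comp_mpolyXU -tnth_nth tnth_mktuple.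
rewrite /F2 /ax /ay /az !(rmorphB, rmorphD, rmorphM, rmorphXn, rmorph1) /=.
rewrite !comp_mpolyC !hX /sg /= !inordK // !scale1r !scaleN1r.
ring.
Qed.

Lemma W_fl (e : nat) : ('X_(inord 3) ^+ e : {mpoly R[4]}) \mPo fl 4 = 'X_(inord 3) ^+ e.
Proof.
rewrite rmorphXn /= comp_mpolyXU -tnth_nth tnth_mktuple /sg /= inordK //.
by rewrite scale1r.
Qed.

Lemma ideal_fl (k Rr t : R) (G : {mpoly R[4]}) :
  closure_ideal k Rr t G -> closure_ideal k Rr (- t) (G \mPo fl 4).
Proof.
move=> [n [a [b h]]]; exists n, (a \mPo fl 4), (b \mPo fl 4).
have := congr1 (comp_mpoly (fl 4)) h.
rewrite !rmorphD !rmorphM /= W_fl -!homog_fl F1_fl F2_fl.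
by [].
Qed.

End Flip.

Definition Amx (R : realFieldType) : 'M[R]_4 := \matrix_(i, j) ((i == j)%:R * sg R i).

Lemma AA (R : realFieldType) : Amx R *m Amx R = 1%:M.
Proof.
apply/matrixP => i j; rewrite !mxE (bigD1 i) //= big1 => [|l /negbTE hl]; last first.
  by rewrite !mxE eq_sym hl !mul0r.
rewrite !mxE eqxx !mul1r addr0; case: eqVneq => [->|_]; first by rewrite ?eqxx ?mul1r sg2.
by rewrite !mul0r mulr0.
Qed.

Lemma AAv (R : realFieldType) (v : 'cV[R]_4) : Amx R *m (Amx R *m v) = v.
Proof. by rewrite mulmxA AA mul1mx. Qed.

Lemma lin_fl (R : realFieldType) (G : {mpoly R[4]}) : lin_subst (Amx R) G = G \mPo fl R 4.
Proof.
rewrite /lin_subst /fl; congr comp_mpoly; apply: eq_mktuple => i.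
rewrite (bigD1 i) //= big1 => [|j /negbTE hj]; last by rewrite !mxE eq_sym hj mul0r scale0r.
by rewrite !mxE eqxx mul1r addr0.
Qed.

Lemma lin_eval (R : realFieldType) (G : {mpoly R[4]}) (v : 'cV[R]_4) :
  (lin_subst (Amx R) G).@[fun i => v i 0] = G.@[fun i => (Amx R *m v) i 0].
Proof.
rewrite /lin_subst comp_mpoly_meval; apply: meval_eq => i.
rewrite tnth_mktuple raddf_sum !mxE; apply: eq_bigr => j _.
by rewrite /= mevalZ mevalXU.
Qed.

Theorem lemma1 (R : realFieldType) (k Rr t : R) :
  0 < Rr -> t != 0 -> k != 0 -> k != 1 ->
  exists A : 'M[R]_4,
    A \in unitmx /\
    (forall G : {mpoly R[4]},
        closure_ideal k Rr t G <-> closure_ideal k Rr (- t) (lin_subst A G)) /\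
    (forall v : 'cV[R]_4,
        closure_points k Rr (- t) v <-> closure_points k Rr t (A *m v)).
Proof.
move=> _ _ _ _; exists (Amx R); split; first by case: (mulmx1_unit (AA R)).
have hI : forall G, closure_ideal k Rr t G <-> closure_ideal k Rr (- t) (lin_subst (Amx R) G).
  move=> G; rewrite lin_fl; split; first exact: ideal_fl.
  by move=> /ideal_fl; rewrite opprK flfl.
have hI' : forall G, closure_ideal k Rr (- t) G -> closure_ideal k Rr t (lin_subst (Amx R) G).
  by move=> G /ideal_fl; rewrite opprK lin_fl.
split=> // v; split.
- move=> [nz hv]; split.
    apply: contraNneq nz => h; by rewrite -(AAv v) h mulmx0.
  move=> G /hI /hv; by rewrite lin_eval.
- move=> [nz hv]; split.
    apply: contraNneq nz => ->; by rewrite mulmx0.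
  move=> G /hI' /hv; by rewrite lin_eval AAv.
Qed.
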